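(* Let $q=p^a$ with $p$ prime, $\mathcal V=\mathbb F_q$ (so $v=q$), and let $G=N.L\le{\rm A\Gamma L}(1,q)$, where $N$ is the group of all translations of $\mathcal V$ and $L\le{\rm \Gamma L}(1,q)$ is transitive on $\mathcal V\setminus\{0\}$. Let $\gamma\subset\mathcal V$ with $|\gamma|=k$, $1\le k\le v-1$, such that $G_\gamma$ is transitive on $\gamma\times(\mathcal V\setminus\gamma)$, and set $M=G_\gamma\cap N$. Then $k\in\{1,v-1\}$ if and only if $M=1$. *)

(* Defs.v *)
From HB Require Import structures.
From mathcomp Require Import all_boot all_order all_algebra all_fingroup.
From mathcomp Require Import all_field.
Set Implicit Arguments. Unset Strict Implicit. Unset Printing Implicit Defensive.
Import GRing.Theory.
Local Open Scope ring_scope.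

Section AGammaL.
Variable F : finFieldType.

Definition transl (b : F) : {perm F} := perm (@addIr F b).

Definition transl_set : {set {perm F}} := [set transl b | b : F].

Definition in_GammaL (g : {perm F}) : Prop :=
  exists (a : F) (sigma : {rmorphism F -> F}),
    a != 0 /\ bijective sigma /\ forall x, g x = a * sigma x.
End AGammaL.

(* Main.v *)
Require Import Defs.
From HB Require Import structures.
From mathcomp Require Import all_boot all_order all_algebra all_fingroup.
From mathcomp Require Import all_field all_solvable.
From mathcomp Require Import ring zify.
From Stdlib Require Import Classical.
Import GRing.Theory.
Local Open Scope ring_scope.

Lemma prim (F : finFieldType) : exists2 w : F, w != 0 & forall y, y != 0 -> exists n, y = w ^+ n.
Proof.
have := field_unit_group_cyclic [group of [set: {unit F}]].
case/cyclicP => u Hu.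
exists (val u); first by rewrite -unitfE; exact: valP.
move=> y y0.
have yu : y \is a GRing.unit by rewrite unitfE.
have : FinRing.unit F yu \in <[u]>%g by rewrite -Hu inE.
case/cycleP => n Hn; exists n.
by rewrite -FinRing.val_unitX -Hn.
Qed.

Lemma semiaff (F : finFieldType) (L : {group {perm F}})
  (HL : forall g, g \in L -> in_GammaL g) g :
  g \in (transl_set F * L)%g ->
  exists a (s : {rmorphism F -> F}) c, a != 0 /\ injective s /\ forall x, g x = a * s x + c.
Proof.
case/mulsgP => t l /imsetP [b _ ->] Hl ->.
have [a [s [a0 [[s' ss' _] Hs]]]] := HL l Hl.
exists a, s, (a * s b); split => //; split; first exact: can_inj ss'.
by move=> x; rewrite permM /transl permE Hs rmorphD mulrDr.
Qed.

Lemma surj_on (F : finType) (gamma : {set F}) (f : F -> F) :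
  injective f -> (forall x, x \in gamma -> f x \in gamma) ->
  forall y, y \in gamma -> exists2 x, x \in gamma & f x = y.
Proof.
move=> fi fs y yg.
have E : f @: gamma = gamma.
  apply/eqP; rewrite eqEcard card_imset // leqnn andbT.
  by apply/subsetP => z /imsetP [x xg ->]; apply: fs.
by move: yg; rewrite -{1}E => /imsetP [x xg ->]; exists x.
Qed.

Lemma KL (F : finFieldType) (L : {group {perm F}}) (gamma : {set F})
  (H1 : ('N_(transl_set F * L)(gamma | 'P) :&: transl_set F = 1)%g)
  (f : F -> F) (d : F) :
  injective f -> (forall x, x \in gamma -> f x \in gamma) ->
  (forall x, x \in gamma -> f x + d \in gamma) -> d = 0.
Proof.
move=> fi fs fd.
have sd : forall y, y \in gamma -> y + d \in gamma.
  by move=> y /(@surj_on _ gamma _ fi fs) [x xg <-]; apply: fd.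
have sd' : forall y, y + d \in gamma -> y \in gamma.
  move=> y /(@surj_on _ gamma _ (@addIr F d) sd) [x xg /addIr <-] //.
have : transl d \in ('N_(transl_set F * L)(gamma | 'P) :&: transl_set F)%g.
  rewrite in_setI; apply/andP; split; last by apply/imsetP; exists d.
  rewrite in_setI; apply/andP; split.
    by rewrite -(mulg1 (transl d)); apply: mem_mulg => //; apply/imsetP; exists d.
  apply/astabsP => y; rewrite /= ?apermE /transl permE.
  by apply/idP/idP; [apply: sd' | apply: sd].
rewrite H1 inE => /eqP /permP /(_ 0); rewrite /transl permE perm1 add0r.
by [].
Qed.

Lemma transl0 (F : finFieldType) : transl (0 : F) = 1%g.
Proof. by apply/permP => x; rewrite perm1 /transl permE addr0. Qed.

Lemma fwd (F : finFieldType) (L : {group {perm F}}) (gamma : {set F}) :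
  (#|gamma| == 1)%N || (#|gamma| == #|F| - 1)%N ->
  ('N_(transl_set F * L)(gamma | 'P) :&: transl_set F = 1)%g.
Proof.
move=> Hk.
have [z Hz] : exists z, forall b, transl b \in ('N(gamma | 'P))%g -> z + b = z.
  case/orP: Hk => [/cards1P [z Ez] | Hk].
    exists z => b /astabsP /(_ z); rewrite /= apermE /transl permE Ez !inE eqxx.
    by move/eqP.
  have : #|~: gamma| == 1%N.
    rewrite cardsCs setCK (eqP Hk) subKn //.
    by rewrite (cardD1 (0 : F)).
  case/cards1P => z Ez; exists z => b /astabsP /(_ z).
  rewrite /= apermE /transl permE => E.
  have : z \in ~: gamma by rewrite Ez inE.
  rewrite inE -E -in_setC Ez inE => /eqP //.
apply/eqP; rewrite eqEsubset; apply/andP; split.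
  apply/subsetP => g; rewrite in_setI => /andP[]; rewrite in_setI => /andP[_ Hn] /imsetP[b _ Hb].
  subst g; have := Hz b Hn; rewrite -{2}(addr0 z) => /addrI ->.
  by rewrite transl0 inE.
rewrite sub1set in_setI in_setI group1 andbT.
have T1 : (1 : {perm F})%g \in transl_set F by rewrite -transl0; apply/imsetP; exists 0.
by rewrite T1 -(mulg1 1%g) mem_mulg.
Qed.

Lemma cardsCF (F : finFieldType) (A : {set F}) : (#|A| + #|~: A|)%N = #|F|.
Proof. exact: cardsC. Qed.

Lemma bwd (F : finFieldType) (L : {group {perm F}})
  (gamma : {set F})
  (HL : forall g, g \in L -> in_GammaL g)
  (Hk1 : (1 <= #|gamma|)%N) (Hk2 : (#|gamma| <= #|F| - 1)%N)
  (Htrans : forall x x' y y' : F, x \in gamma -> x' \in gamma ->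
     y \notin gamma -> y' \notin gamma ->
     exists2 g, g \in ('N_(transl_set F * L)(gamma | 'P))%g
                & g x = x' /\ g y = y')
  (H1 : ('N_(transl_set F * L)(gamma | 'P) :&: transl_set F = 1)%g) :
  (#|gamma| == 1)%N || (#|gamma| == #|F| - 1)%N.
Proof.
have Hmem : forall h, h \in ('N_(transl_set F * L)(gamma | 'P))%g ->
    h \in (transl_set F * L)%g /\ forall x, (h x \in gamma) = (x \in gamma).
  move=> h; rewrite in_setI => /andP[hG hN]; split => // x.
  move/astabsP: hN => hN.
  by have := hN x; rewrite /= apermE.
have [x0 x0g] : exists x0, x0 \in gamma.
  by move: Hk1; rewrite card_gt0 => /set0Pn.
have [y0 y0g] : exists y0, y0 \notin gamma.
  have : (0 < #|~: gamma|)%N.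
    have := @cardsCF F gamma; have : (0 < #|F|)%N by rewrite (cardD1 (0 : F)).
    move: Hk2; lia.
  by rewrite card_gt0 => /set0Pn [y]; rewrite inE => yg; exists y.
have KL' := @KL F L gamma H1.
case: (classic (exists a c (f : F -> F), [/\ a != 1, injective f,
   (forall x, x \in gamma -> f x \in gamma) & forall x, f x = a * x + c]))
  => [[a [c [f [a1 fi fs fE]]]] | nP].
  have a0 : a != 0.
    apply/negP => /eqP a0; have := fi 0 1; rewrite !fE a0 !mul0r.
    by move=> /(_ erefl) /esym /eqP; rewrite oner_eq0.
  have a1' : 1 - a != 0 by rewrite subr_eq0 eq_sym.
  pose z := c / (1 - a).
  have fz : f z = z by rewrite fE /z; field.
  have hz : forall h, h \in ('N_(transl_set F * L)(gamma | 'P))%g -> h z = z.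
    move=> h hH; have [hG hs] := Hmem h hH.
    have [b [t [e [b0 [ti hE]]]]] := @semiaff F L HL h hG.
    pose a' := t a.
    pose c'' := b * t c + e - a' * e.
    have a'1 : a' != 1 by rewrite /a' -(rmorph1 t) (inj_eq ti).
    have a'0 : a' != 0 by rewrite /a' fmorph_eq0.
    pose f' := fun x => a' * x + c''.
    have comm : forall u, f' (h u) = h (f u).
      by move=> u; rewrite /f' !hE fE rmorphD rmorphM /c'' /a'; ring.
    have f'i : injective f' by move=> u v; rewrite /f' => /addIr /(mulfI a'0).
    have hst : forall x, x \in gamma -> h x \in gamma by move=> x; rewrite hs.
    have f's : forall y, y \in gamma -> f' y \in gamma.
      move=> y /(@surj_on _ gamma _ (@perm_inj _ h) hst) [u ug <-].
      by rewrite comm hs; apply: fs.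
    have fd : forall x, x \in gamma -> f (f' x) + (a' * c + c'' - a * c'' - c) \in gamma.
      move=> x xg.
      have -> : f (f' x) + (a' * c + c'' - a * c'' - c) = f' (f x) by rewrite fE /f' fE; ring.
      exact: (f's _ (fs _ xg)).
    have d0 := KL' (fun x => f (f' x)) (a' * c + c'' - a * c'' - c)
      (inj_comp fi f'i) (fun x xg => fs _ (f's _ xg)) fd.
    have f'z : f' z = z.
      have : f' z - z = (a' * c + c'' - a * c'' - c) / (1 - a) by rewrite /f' /z; field.
      by rewrite d0 mul0r => /eqP; rewrite subr_eq0 => /eqP.
    have E1 : f' (h z) = h z by rewrite comm fz.
    have E : (a' - 1) * (h z - z) = (f' (h z) - h z) - (f' z - z) by rewrite /f'; ring.
    rewrite E1 f'z !subrr in E.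
    by move/eqP: E; rewrite mulf_eq0 subr_eq0 (negbTE a'1) /= subr_eq0 => /eqP.
  case zg: (z \in gamma).
    apply/orP; left; rewrite eqn_leq Hk1 andbT -(cards1 z).
    apply: subset_leq_card; apply/subsetP => x xg.
    have [h hH [hzx _]] := Htrans z x y0 y0 zg xg y0g y0g.
    by rewrite inE -hzx hz.
  apply/orP; right.
  have : (#|~: gamma| <= 1)%N.
    rewrite -(cards1 z); apply: subset_leq_card; apply/subsetP => y; rewrite in_setC => yg.
    have [h hH [_ hzy]] := Htrans x0 x0 z y x0g x0g (negbT zg) yg.
    by rewrite inE -hzy hz.
  have := @cardsCF F gamma; move: Hk2; lia.
have aff1 : forall a c (f : F -> F), injective f ->
    (forall x, x \in gamma -> f x \in gamma) -> (forall x, f x = a * x + c) -> a = 1.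
  move=> a c f fi fs fE; case: (eqVneq a 1) => // a1; exfalso.
  by apply: nP; exists a, c, f.
have [w w0 wE] := prim F.
pose Phi (g : {perm F}) := (g w - g 0) / (g 1 - g 0).
have PhiE : forall (g : {perm F}) a (s : {rmorphism F -> F}) c, a != 0 ->
    (forall x, g x = a * s x + c) -> Phi g = s w.
  move=> g a s c a0 gE; rewrite /Phi !gE rmorph0 rmorph1. field; by rewrite addrK.
have Phi_inj : {in ('N_(transl_set F * L)(gamma | 'P))%g &, injective Phi}.
  move=> g1 g2 gH g2H.
  have [gG gs] := Hmem g1 gH; have [g2G g2s] := Hmem g2 g2H.
  have [a [s [c [a0 [si gE]]]]] := @semiaff F L HL g1 gG.
  have [a' [s' [c' [a'0 [s'i g2E]]]]] := @semiaff F L HL g2 g2G.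
  rewrite (PhiE g1 a s c a0 gE) (PhiE g2 a' s' c' a'0 g2E) => Esw.
  have Es : forall x, s x = s' x.
    move=> x; case: (eqVneq x 0) => [-> | xn0]; first by rewrite !rmorph0.
    by have [n ->] := wE x xn0; rewrite !rmorphXn Esw.
  pose u := fun y => (a / a') * (y - c') + c.
  have aa0 : a / a' != 0 by rewrite mulf_neq0 // invr_eq0.
  have ui : injective u by move=> y1 y2; rewrite /u => /addIr /(mulfI aa0) /addIr.
  have g2st : forall x, x \in gamma -> g2 x \in gamma by move=> x; rewrite g2s.
  have us : forall y, y \in gamma -> u y \in gamma.
    move=> y /(@surj_on _ gamma _ (@perm_inj _ g2) g2st) [v vg <-].
    have -> : u (g2 v) = g1 v by rewrite /u gE g2E Es; field.
    by rewrite gs.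
  have aa1 : a / a' = 1 := aff1 (a / a') (c - a / a' * c') u ui us
     (fun y => ltac:(rewrite /u; ring)).
  have aa : a = a' by have := congr1 (fun t => t * a') aa1; rewrite mulfVK // mul1r.
  have ud : forall x, x \in gamma -> id x + (c - c') \in gamma.
    move=> x xg; have -> : id x + (c - c') = u x by rewrite /u aa divff // mul1r; ring.
    exact: us.
  have cc : c - c' = 0 := KL' id (c - c') (@inj_id F) (fun x xg => xg) ud.
  apply/permP => x; rewrite gE g2E aa Es.
  by move/eqP: cc; rewrite subr_eq0 => /eqP ->.
have C1 : (#|gamma| * #|~: gamma| <= #|('N_(transl_set F * L)(gamma | 'P))%g|)%N.
  rewrite -cardsX.
  apply: leq_trans (leq_imset_card (fun g : {perm F} => (g x0, g y0)) _).
  apply: subset_leq_card; apply/subsetP => -[x y]; rewrite inE /= => /andP[xg].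
  rewrite in_setC => yg.
  have [g gH [E1 E2]] := Htrans x0 x y0 y x0g xg y0g yg.
  by apply/imsetP; exists g => //; rewrite E1 E2.
have C2 : (#|('N_(transl_set F * L)(gamma | 'P))%g| <= #|[set~ (0%R : F)]|)%N.
  rewrite -(card_in_imset Phi_inj); apply: subset_leq_card.
  apply/subsetP => _ /imsetP [g gH ->]; rewrite !inE.
  have [gG _] := Hmem g gH.
  have [a [s [c [a0 [si gE]]]]] := @semiaff F L HL g gG.
  by rewrite (PhiE g a s c a0 gE) fmorph_eq0.
have C3 := @cardsCF F gamma.
have C4 : #|[set~ (0%R : F)]| = #|F|.-1 by exact: cardsC1.
apply/negPn/negP; rewrite negb_or => /andP [/eqP k1 /eqP k2].
move: C1 C2 C3 C4 Hk1 Hk2 k1 k2.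
set k := #|gamma|; set m := #|~: gamma|; set q := #|F|; set n := #|_ :&: _|.
nia.
Qed.

Local Close Scope ring_scope.

Theorem lemma6p2 (F : finFieldType) (L : {group {perm F}})
  (gamma : {set F})
  (HL : forall g, g \in L -> in_GammaL g)
  (Ltrans : forall x y : F, x != 0%R -> y != 0%R ->
     exists2 g, g \in L & g x = y)
  (Hk1 : 1 <= #|gamma|) (Hk2 : #|gamma| <= #|F| - 1)
  (Htrans : forall x x' y y' : F, x \in gamma -> x' \in gamma ->
     y \notin gamma -> y' \notin gamma ->
     exists2 g, g \in ('N_(transl_set F * L)(gamma | 'P))%g
                & g x = x' /\ g y = y') :
  (#|gamma| == 1) || (#|gamma| == #|F| - 1) <->
  ('N_(transl_set F * L)(gamma | 'P) :&: transl_set F = 1)%g.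
Proof.
split; first exact: fwd.
exact: bwd.
Qed.
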